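(* Let $q,n\ge 2$ and $0<d\le n$ be integers with $(q,d)\neq(2,n)$, and let $G=H_q(n,d)$. (a) If $q\ge 3$, then the graph distance between any two vertices of $G$ is at most $2$, and $\mathrm{girth}(G)=3$. (b) If $q=2$ and $d\le \frac{2n}{3}$, then $\mathrm{girth}(G)=3$. (c) If $q=2$ and $\frac{2n}{3}<d<n$, then $\mathrm{girth}(G)=4$; moreover, $G$ contains a cycle of odd length.
   Context: $\mathbb{Z}_q=\mathbb{Z}/q\mathbb{Z}$. For $x,y\in\mathbb{Z}_q^n$, $\mathrm{d}(x,y)=|\{i: x_i\neq y_i\}|$ is the Hamming distance. The Hamming-distance graph $H_q(n,d)$ is the simple undirected graph with vertex set $\mathbb{Z}_q^n$ in which $x,y$ are adjacent iff $\mathrm{d}(x,y)\ge d$. The girth is the length of a shortest cycle. *)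

(* Defs.v *)
From mathcomp Require Import all_boot.
Set Implicit Arguments. Unset Strict Implicit. Unset Printing Implicit Defensive.

(* Vertices of H_q(n,d): words of length n over the alphabet Z_q,
   represented as 'I_q (only equality of letters matters). *)
Definition word (q n : nat) := {ffun 'I_n -> 'I_q}.

Definition hamming q n (x y : word q n) : nat := #|[set i | x i != y i]|.

Definition hadj q n d : rel (word q n) :=
  fun x y => (x != y) && (d <= hamming x y).

Definition gdist_le (T : eqType) (e : rel T) (x y : T) (k : nat) : Prop :=
  exists p : seq T, [/\ path e x p, last x p = y & size p <= k].

Definition is_cycle (T : eqType) (e : rel T) (s : seq T) : Prop :=
  3 <= size s /\ ucycle e s.

Definition girth_eq (T : eqType) (e : rel T) (g : nat) : Prop :=
  (exists s, is_cycle e s /\ size s = g) /\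
  (forall s, is_cycle e s -> g <= size s).

Definition has_odd_cycle (T : eqType) (e : rel T) : Prop :=
  exists s, is_cycle e s /\ odd (size s).

(* Main.v *)
Require Import Defs.
From mathcomp Require Import all_boot.
From mathcomp Require Import zify.

Lemma card_pred_iota n (P : pred nat) :
  #|[set i : 'I_n | P i]| = count P (iota 0 n).
Proof.
rewrite -sum1dep_card -(big_mkord (fun i => P i) (fun _ => 1)).
by rewrite /index_iota subn0 sum1_count.
Qed.

Lemma hamming_sum q n (x y : word q n) :
  hamming x y = \sum_(i < n) (x i != y i).
Proof.
rewrite /hamming -sum1dep_card big_mkcond /=.
by apply: eq_bigr => i _; case: (x i != y i).
Qed.

Lemma hamming_sym q n (x y : word q n) : hamming x y = hamming y x.
Proof. by rewrite !hamming_sum; apply: eq_bigr => i _; rewrite eq_sym. Qed.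

Lemma hamming_refl q n (x : word q n) : hamming x x = 0.
Proof. by rewrite hamming_sum big1 // => i _; rewrite eqxx. Qed.

Lemma neq_ham q n (x y : word q n) : 0 < hamming x y -> x != y.
Proof. by apply: contraTneq => ->; rewrite hamming_refl. Qed.

Lemma hadjI q n d (x y : word q n) : 0 < d -> d <= hamming x y -> hadj d x y.
Proof.
move=> d0 h; rewrite /hadj h andbT; apply: neq_ham; exact: leq_trans h.
Qed.

Lemma cnt_pref n a b : a <= b ->
  count (fun i => (i < a) != (i < b)) (iota 0 n) = minn n b - minn n a.
Proof.
move=> ab; elim: n => [|m IH]; first by rewrite /= !min0n.
rewrite -[m.+1]addn1 iotaD count_cat IH /= add0n.
case: (ltnP m a) => h1; case: (ltnP m b) => h2 /=; lia.
Qed.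

Lemma cnt_pref2 n a b : a <= n -> b <= n ->
  count (fun i => (i < a) != (i < b)) (iota 0 n) = maxn a b - minn a b.
Proof.
move=> an bn; case: (leqP a b) => ab.
  rewrite cnt_pref //; lia.
rewrite (eq_count (a2 := fun i => (i < b) != (i < a))); last by move=> i; rewrite eq_sym.
rewrite cnt_pref; [lia | exact: ltnW].
Qed.

Definition b2o (b : bool) : 'I_2 := if b then Ordinal (isT : 1 < 2) else Ordinal (isT : 0 < 2).

Lemma b2o_neq a b : (b2o a != b2o b) = (a != b).
Proof. by case: a; case: b. Qed.

Definition pw n (a : nat) (c : bool) : word 2 n :=
  [ffun i : 'I_n => b2o ((i < a) (+) c)].

Lemma hpw n a b c c' : a <= n -> b <= n ->
  hamming (pw n a c) (pw n b c') =
  if c == c' then maxn a b - minn a b else n - (maxn a b - minn a b).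
Proof.
move=> an bn.
rewrite /hamming (@eq_finset _ _ (fun i : 'I_n => ((i < a) (+) c) != ((i < b) (+) c'))); last first.
  by move=> i; rewrite !ffunE b2o_neq.
rewrite (card_pred_iota n (fun i => ((i < a) (+) c) != ((i < b) (+) c'))) /=.
case: (eqVneq c c') => [<-|ne].
  rewrite -(cnt_pref2 _ _ _ an bn); apply: eq_count => i /=.
  by case: (i < a); case: (i < b); case: c.
rewrite -(cnt_pref2 _ _ _ an bn).
have -> : n - count (fun i => (i < a) != (i < b)) (iota 0 n) =
   count (predC (fun i => (i < a) != (i < b))) (iota 0 n).
  by rewrite -{1}[n](size_iota 0 n) -(count_predC (fun i => (i < a) != (i < b))) addKn.
apply: eq_count => i /=.
by move: ne; case: (i < a); case: (i < b); case: c; case: c'.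
Qed.

Lemma no_tri n (x y z : word 2 n) :
  hamming x y + hamming y z + hamming x z <= 2 * n.
Proof.
rewrite !hamming_sum -!big_split /=.
have -> : 2 * n = \sum_(i < n) 2 by rewrite sum_nat_const card_ord mulnC.
apply: leq_sum => i _.
move: (x i) (y i) (z i).
by do 3! case=> [[|[|?]] ?] //.
Qed.

Lemma ham_full q n (x y : word q n) : (forall i, x i != y i) -> hamming x y = n.
Proof.
move=> h; rewrite /hamming (@eq_finset _ _ (fun i : 'I_n => true)); last by move=> i; rewrite h.
by rewrite (card_pred_iota n (fun _ => true)) count_predT size_iota.
Qed.

Definition pickc (a b : nat) : nat :=
  if (a != 0) && (b != 0) then 0 else if (a != 1) && (b != 1) then 1 else 2.

Lemma pickc_spec a b : [/\ pickc a b <= 2, pickc a b != a & pickc a b != b].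
Proof. by move: a b => [|[|a]] [|[|b]]. Qed.

Lemma partA q n d : 0 < d -> d <= n ->
  (forall x y : word q.+3 n, gdist_le (@hadj q.+3 n d) x y 2) /\
  girth_eq (@hadj q.+3 n d) 3.
Proof.
move=> d0 dn.
have inK k : k <= 2 -> nat_of_ord (inord k : 'I_q.+3) = k.
  by move=> hk; rewrite inordK //; apply: leq_trans hk _.
split.
  move=> x y; case: (eqVneq x y) => [<-|ne].
    by exists [::]; split.
  pose z : word q.+3 n := [ffun i => inord (pickc (x i) (y i))].
  have hz i : (z i != x i) && (z i != y i).
    rewrite ffunE; case: (pickc_spec (x i) (y i)) => h1 h2 h3.
    by apply/andP; split; apply/eqP => /(congr1 val) /=; rewrite inK //; apply/eqP.
  exists [:: z; y]; split => //=.
  rewrite !hadjI //.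
    by rewrite ham_full // => i; case/andP: (hz i).
  by rewrite hamming_sym ham_full // => i; case/andP: (hz i).
pose cw k : word q.+3 n := [ffun _ => inord k].
have hcw a b : a <= 2 -> b <= 2 -> a != b -> hamming (cw a) (cw b) = n.
  move=> ha hb ab; apply: ham_full => i; rewrite !ffunE.
  by apply/eqP => /(congr1 val) /=; rewrite !inK //; apply/eqP.
split; last by move=> s [].
exists [:: cw 0; cw 1; cw 2]; split => //.
split => //; rewrite /ucycle /= !inE !hadjI ?hcw //.
rewrite negb_or !neq_ham ?hcw //; exact: leq_trans dn.
Qed.

Lemma partB n d : 0 < d -> d <= n -> 3 * d <= 2 * n -> girth_eq (@hadj 2 n d) 3.
Proof.
move=> d0 dn h.
split; last by move=> s [].
exists [:: pw n 0 false; pw n d false; pw n (n - d) true]; split => //.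
split => //; rewrite /ucycle /= !inE negb_or.
rewrite !hadjI ?neq_ham ?hpw //= ?leq_subr //; lia.
Qed.

Lemma path_iota (P : rel nat) a L :
  (forall j, a <= j < a + L -> P j j.+1) -> path P a (iota a.+1 L).
Proof.
elim: L a => [|L IH] a h //=.
apply/andP; split.
  by apply: h; rewrite leqnn addnS ltnS leq_addr.
apply: IH => j /andP [h1 h2]; apply: h.
by rewrite addnS (ltnW h1) /= -addSn.
Qed.

Lemma last_iota a L : last a (iota a.+1 L) = a + L.
Proof. elim: L a => [|L IH] a /=; first by rewrite addn0. by rewrite IH addnS. Qed.

Lemma partC n d : 0 < d -> d < n -> 2 * n < 3 * d ->
  girth_eq (@hadj 2 n d) 4 /\ has_odd_cycle (@hadj 2 n d).
Proof.
move=> d0 dn h.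
have notri (x y z : word 2 n) : hadj d x y -> hadj d y z -> hadj d z x -> False.
  move=> /andP [_ h1] /andP [_ h2] /andP [_ h3].
  have := no_tri _ x y z; rewrite (hamming_sym _ _ x z); lia.
split; first split.
- exists [:: pw n 0 false; pw n 0 true; pw n 1 false; pw n 1 true]; split => //.
  split => //; rewrite /ucycle /= !inE !negb_or.
  rewrite !hadjI ?neq_ham ?hpw //=; lia.
- move=> [|x [|y [|z [|w s]]]] [] //= _ /andP [].
  by rewrite /cycle /= => /and4P [h1 h2 h3 _]; case: (notri _ _ _ h1 h2 h3).
pose k := (d.+1)./2.
have hk : d.+1 = odd d.+1 + k.*2 by rewrite odd_double_half.
have ho : odd d.+1 <= 1 by case: (odd d.+1).
rewrite -muln2 in hk.
pose v j := pw n j (odd j).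
exists (map v (iota 0 (k.*2).+1)); split; last by rewrite size_map size_iota /= odd_double.
split; first by rewrite size_map size_iota -muln2; lia.
apply/andP; split; last first.
  rewrite map_inj_in_uniq ?iota_uniq // => a b; rewrite !mem_iota !add0n -!muln2 /= => ha hb e.
  have := hamming_refl _ _ (v a); rewrite {2}e /v hpw; try lia.
  case: eqP => [_|ne]; first lia.
  move=> e2.
  have [[ea eb]|[ea eb]] : (a = 0 /\ b = k * 2) \/ (a = k * 2 /\ b = 0) by lia.
    by exfalso; apply: ne; rewrite ea eb oddM andbF.
  by exfalso; apply: ne; rewrite ea eb oddM andbF.
rewrite /= rcons_path path_map last_map last_iota add0n.
apply/andP; split.
  apply: path_iota => j /andP [_ hj] /=.
  rewrite /v hadjI // hpw -?muln2 /=; try lia.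
  by case: (odd j) => /=; lia.
rewrite /v hadjI // hpw -?muln2 /= ?oddM ?andbF /=; lia.
Qed.

Theorem proposition2p3 (q n d : nat) :
  2 <= q -> 2 <= n -> 0 < d -> d <= n -> ~ (q = 2 /\ d = n) ->
  [/\ (3 <= q ->
         (forall x y : word q n, gdist_le (@hadj q n d) x y 2) /\
         girth_eq (@hadj q n d) 3),
      (q = 2 -> 3 * d <= 2 * n -> girth_eq (@hadj q n d) 3)
    & (q = 2 -> 2 * n < 3 * d -> d < n ->
         girth_eq (@hadj q n d) 4 /\ has_odd_cycle (@hadj q n d))].
Proof.
move=> q2 n2 d0 dn _; split.
- by case: q q2 => [|[|[|q]]] //= _ _; apply: partA.
- by move=> -> h; apply: partB.
- by move=> -> h1 h2; apply: partC.
Qed.
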